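(* Let $p$ be a prime, $P$ a finite $p$-group, and $\alpha\in\operatorname{Irr}(P)$ with $c(\alpha)=p^a$ for some $a\ge1$. (a) If $p$ is odd or $p^a=4$, then $\mathbb{Q}_{p^a}(\alpha)=\mathbb{Q}_p(\alpha)$. (b) If $p=2$ and $p^a\ge 8$, then $[\mathbb{Q}_{p^a}(\alpha):\mathbb{Q}_p(\alpha)]\le 2$ and $[\mathbb{Q}_{p^a}(\alpha):\mathbb{Q}_p(\alpha)]$ divides $\alpha(1)$.
   Context: For $n\ge1$, $\mathbb{Q}_n:=\mathbb{Q}(e^{2\pi i/n})$. For a character $\chi$, $\mathbb{Q}(\chi)$ is its field of values and $c(\chi)$ is the conductor of $\mathbb{Q}(\chi)$, i.e. the smallest $n\ge1$ with $\mathbb{Q}(\chi)\subseteq\mathbb{Q}_n$. $\mathbb{Q}_m(\chi)$ denotes the compositum of $\mathbb{Q}_m$ and $\mathbb{Q}(\chi)$. *)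

(* Defs.v *)
From HB Require Import structures.
From mathcomp Require Import all_boot all_order all_algebra all_fingroup all_solvable all_field all_character.
Set Implicit Arguments. Unset Strict Implicit. Unset Printing Implicit Defensive.
Import GRing.Theory Num.Theory.
Local Open Scope ring_scope.

(* x lies in Q_n = Q(e^{2 pi i/n}) (inside algC): x is a rational polynomial
   expression in some primitive n-th root of unity. *)
Definition inQn (n : nat) (x : algC) : Prop :=
  exists2 z : algC, n.-primitive_root z &
    exists q : {poly rat}, x = (map_poly ratr q).[z].

Definition values_in_Qn (gT : finGroupType) (G : {group gT}) (chi : 'CF(G))
  (n : nat) : Prop := forall g, g \in G -> inQn n (chi g).

Definition conductor_is (gT : finGroupType) (G : {group gT}) (chi : 'CF(G))
  (n : nat) : Prop :=
  (0 < n)%N /\ values_in_Qn chi n /\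
  (forall m, (0 < m)%N -> values_in_Qn chi m -> (n <= m)%N).

(* Main.v *)
Require Import Defs.
From HB Require Import structures.
From mathcomp Require Import all_boot all_order all_algebra all_fingroup all_solvable all_field all_character.
From mathcomp Require Import ring zify.
Import GRing.Theory Num.Theory.
Set Implicit Arguments. Unset Strict Implicit. Unset Printing Implicit Defensive.

Lemma geom_aux y n : y * \sum_(i < n) y.+1 ^ i + 1 = y.+1 ^ n.
Proof.
elim: n => [|n IH]; first by rewrite big_ord0 muln0 expn0.
rewrite big_ord_recr /= mulnDr -addnAC IH expnS; ring.
Qed.

Lemma geom_nat y n : 0 < y -> (y - 1) * \sum_(i < n) y ^ i = y ^ n - 1.
Proof.
case: y => // y _; rewrite subn1 /= -(geom_aux y n) addnK //.
Qed.

Lemma pow_exp y d n : y = 1 + d -> exists q, y ^ n = 1 + n * d + q * (d * d).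
Proof.
move=> ->; elim: n => [|n [q IH]]; first by exists 0; rewrite expn0.
exists (n + q + q * d); rewrite expnS IH; ring.
Qed.

Lemma sum_exp y d n : y = 1 + d ->
  exists Q, \sum_(i < n) y ^ i = n + d * 'C(n, 2) + Q * (d * d).
Proof.
move=> yd; elim: n => [|n [Q IH]]; first by exists 0; rewrite big_ord0 bin0n /= muln0.
have [q Hq] := @pow_exp y d n yd.
exists (Q + q); rewrite big_ord_recr /= IH Hq binS bin1; ring.
Qed.

Lemma S_form p y : prime p -> 0 < y -> p %| y - 1 -> (odd p || (4 %| y - 1)) ->
  exists t, \sum_(i < p) y ^ i = p * (1 + p * t).
Proof.
move=> pp y0 pd h4.
have yd : y = 1 + (y - 1) by rewrite subnKC.
have [Q ->] := @sum_exp y (y - 1) p yd.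
move: pd h4; set d := y - 1 => /dvdnP[d1 ->] h4.
have : p * p %| d1 * p * 'C(p, 2) + Q * (d1 * p * (d1 * p)).
  apply: dvdn_add; last by apply/dvdnP; exists (Q * d1 * d1); ring.
  have [p2|op] := even_prime pp.
    move: h4; rewrite p2 /= bin2 /= => h4.
    by rewrite muln1 (dvdn_trans _ h4).
  have p3 : 0 < 2 < p by rewrite /= odd_prime_gt2.
  have /dvdnP[c ->] := prime_dvd_bin pp p3.
  by apply/dvdnP; exists (d1 * c); ring.
rewrite -addnA; case/dvdnP=> t ->; exists t; ring.
Qed.

Lemma S_div p y : prime p -> 0 < y -> p %| y - 1 -> p %| \sum_(i < p) y ^ i.
Proof.
move=> pp y0 pd.
have yd : y = 1 + (y - 1) by rewrite subnKC.
have [Q ->] := @sum_exp y (y - 1) p yd.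
move: pd; set d := y - 1 => /dvdnP[d1 ->].
by apply/dvdnP; exists (1 + d1 * 'C(p, 2) + Q * d1 * d1 * p); ring.
Qed.

Lemma strong_step p y b : prime p -> 0 < y -> p %| y - 1 ->
  (odd p || (4 %| y - 1)) -> p ^ b.+1 %| y ^ p - 1 -> p ^ b %| y - 1.
Proof.
move=> pp y0 pd h4; rewrite -geom_nat //.
have [t ->] := S_form pp y0 pd h4.
rewrite expnSr (mulnC p) mulnA dvdn_pmul2r ?prime_gt0 //.
rewrite Gauss_dvdl // coprimeXl // prime_coprime //.
apply/negP => /dvdnP[c] /(congr1 (modn^~ p)).
by rewrite modnMl mulnC -modnDmr modnMl addn0 modn_small ?prime_gt1.
Qed.

Lemma weak_step p y b : prime p -> 0 < y -> p ^ b.+1 %| y - 1 ->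
  p ^ b.+2 %| y ^ p - 1.
Proof.
move=> pp y0 pd; rewrite -geom_nat // expnS mulnC dvdn_mul //.
by apply: S_div => //; apply: dvdn_trans pd; rewrite dvdn_exp.
Qed.

Lemma pow1 d k m : 0 < k -> d %| k - 1 -> d %| k ^ m - 1.
Proof.
move=> k0; rewrite -!eqn_mod_dvd ?expn_gt0 ?k0 // => /eqP h.
by rewrite -modnXm h modnXm exp1n.
Qed.

Lemma arith_main p a k : prime p -> 2 <= a -> 0 < k -> p %| k - 1 ->
  ~~ (p ^ a %| k - 1) -> [|| odd p, 4 %| k - 1 | a == 2] ->
  exists m, (p ^ a.-1 %| k ^ m - 1) && ~~ (p ^ a %| k ^ m - 1).
Proof.
move=> pp a2 k0 pd npa cnd.
case: (eqVneq a 2) => [a2e|an2].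
  by exists 1; rewrite expn1 a2e /= expn1 pd -a2e npa.
have h4 : odd p || (4 %| k - 1) by move: cnd; rewrite (negPf an2) orbF.
have iter j : p ^ j.+1 %| k ^ (p ^ j) - 1.
  elim: j => [|j IH]; first by rewrite !expn1.
  by rewrite [p ^ j.+1]expnS [p * _]mulnC expnM weak_step // expn_gt0 k0.
have exP : exists c, p ^ a %| k ^ (p ^ c) - 1.
  by exists a.-1; rewrite -[in p ^ a](ltn_predK a2) iter.
case: (ex_minnP exP) => c Hc Hmin.
have c0 : 0 < c.
  by rewrite lt0n; apply/negP => /eqP c0; move: Hc; rewrite c0 expn0 expn1 (negPf npa).
exists (p ^ c.-1); apply/andP; split; last first.
  by apply/negP => /Hmin; rewrite leqNgt ltn_predL c0.
apply: (strong_step pp); first by rewrite expn_gt0 k0.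
- exact: pow1.
- by case/orP: h4 => [->//|h]; rewrite pow1 ?orbT.
by rewrite prednK ?(leq_trans _ a2) // -expnM -expnSr prednK.
Qed.
Import GRing.Theory.
Local Open Scope ring_scope.

Section Hom.
Variables (L : fieldExtType rat) (E : {subfield L}) (z : L).

Definition sig (r : L) := kHomExtend E \1%VF z r.

Lemma sig_hom r : root (minPoly E z) r -> kHom E <<E; z>> (sig r).
Proof.
move=> rr; apply: kHomExtendP => //; first exact: kHom1.
by rewrite (kHom_poly_id (kHom1 E E)) ?minPolyOver.
Qed.

Lemma sig_val r : root (minPoly E z) r -> sig r z = r.
Proof.
move=> rr; apply: (kHomExtend_val (K := E)); first exact: kHom1.
by rewrite (kHom_poly_id (kHom1 E E)) ?minPolyOver.
Qed.

Lemma hom_fixE (f : 'End(L)) x : kHom E <<E; z>> f -> x \in E -> f x = x.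
Proof. by case/kHomP_tmp => fx _; apply: fx. Qed.

Lemma hom_M (f : 'End(L)) x y : kHom E <<E; z>> f -> x \in <<E; z>>%VS ->
  y \in <<E; z>>%VS -> f (x * y) = f x * f y.
Proof. by case/kHomP_tmp => _ fM; apply: fM. Qed.

Lemma hom_X (f : 'End(L)) x m : kHom E <<E; z>> f -> x \in <<E; z>>%VS ->
  f (x ^+ m) = (f x) ^+ m.
Proof.
move=> hf xF; elim: m => [|m IH].
  by rewrite !expr0 (hom_fixE hf) ?mem1v.
by rewrite !exprS (hom_M hf) ?rpredX // IH.
Qed.

Lemma map_fix (f : 'End(L)) (M : {vspace L}) c :
  {in M, forall v, f v = v} -> c \is a polyOver M -> map_poly f c = c.
Proof.
move=> fM /polyOverP cM; apply/polyP => i; rewrite coef_map_id0 ?linear0 //.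
exact: fM.
Qed.

Lemma hom_fix_adj (f : 'End(L)) y : kHom E <<E; z>> f -> y \in <<E; z>>%VS ->
  f y = y -> {in <<1; y>>%VS, forall v, f v = v}.
Proof.
move=> hf yF fy v /Fadjoin_polyP[q q1 ->].
have qF : q \is a polyOver <<E; z>>%VS.
  by apply: (polyOverSv (sub1v _)).
rewrite (kHom_horner hf qF yF) fy (kHom_poly_id hf) //.
exact: (polyOverSv (sub1v _)).
Qed.

Lemma root_hom (f : 'End(L)) x : kHom E <<E; z>> f -> x \in <<E; z>>%VS ->
  root (minPoly E z) x -> root (minPoly E z) (f x).
Proof.
move=> hf xF; apply: (kHom_root_id (subv_adjoin _ _) hf) => //.
exact: minPolyOver.
Qed.

End Hom.
Section Cyc.
Variables (L : fieldExtType rat) (p a : nat) (z : L) (E : {subfield L}).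
Hypotheses (pp : prime p) (a0 : (0 < a)%N) (zprim : (p ^ a).-primitive_root z).

Lemma pa_split : (p ^ a = p * p ^ a.-1)%N.
Proof. by rewrite -expnS prednK. Qed.

Lemma zF m : z ^+ m \in <<E; z>>%VS.
Proof. by rewrite rpredX ?memv_adjoin. Qed.

Lemma valid_mod (wE : z ^+ (p ^ a.-1)%N \in E) k :
  root (minPoly E z) (z ^+ k) -> (0 < k)%N /\ (p %| k - 1)%N.
Proof.
move=> rk; have hs := sig_hom rk.
have := hom_fixE hs wE; rewrite (hom_X _ hs) ?memv_adjoin // sig_val //.
rewrite -exprM => /eqP; rewrite (eq_prim_root_expr zprim) pa_split.
have q0 : (0 < p ^ a.-1)%N by rewrite expn_gt0 prime_gt0.
move=> /eqP h.
have /eqP : (k %% p * p ^ a.-1 = 1 %% p * p ^ a.-1)%N.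
  by rewrite !muln_modl ?prime_gt0 // h mul1n.
rewrite eqn_pmul2r // (modn_small (prime_gt1 pp)) => /eqP km.
have k0 : (0 < k)%N by move: km; case: (k) => //; rewrite mod0n.
by split=> //; rewrite -eqn_mod_dvd // km (modn_small (prime_gt1 pp)).
Qed.

Lemma valid_mul k1 k2 : root (minPoly E z) (z ^+ k1) ->
  root (minPoly E z) (z ^+ k2) -> root (minPoly E z) (z ^+ (k1 * k2)).
Proof.
move=> r1 r2; have hs := sig_hom r2.
have := root_hom hs (zF k1) r1.
by rewrite (hom_X _ hs) ?memv_adjoin // sig_val // -exprM mulnC.
Qed.

End Cyc.
Section Fixed.
Variables (L : fieldExtType rat) (p a : nat) (z : L) (E : {subfield L}).
Hypotheses (pp : prime p) (a0 : (0 < a)%N) (zprim : (p ^ a).-primitive_root z).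

Lemma fixed_field (a2 : (1 < a)%N) (EQ : (E <= <<1; z>>)%VS) k :
  (0 < k)%N -> root (minPoly E z) (z ^+ k) -> (p ^ a.-1 %| k - 1)%N ->
  ~~ (p ^ a %| k - 1)%N -> (E <= <<1; z ^+ p>>)%VS.
Proof.
move=> k0 rk dk ndk.
have [u ku] := dvdnP dk.
have pu : ~~ (p %| u)%N.
  apply: contra ndk => /dvdnP[v uv]; apply/dvdnP; exists v.
  by rewrite ku uv (pa_split p a0); ring.
pose zeta := z ^+ (k - 1).
have zk : z ^+ k = z * zeta by rewrite /zeta -exprS subn1 prednK.
have pdpa : (p %| p ^ a)%N by rewrite (pa_split p a0) dvdn_mulr.
have wprim : p.-primitive_root (z ^+ (p ^ a.-1)).
  by have := dvdn_prim_root zprim pdpa; rewrite (pa_split p a0) mulKn ?prime_gt0.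
have zprim' : p.-primitive_root zeta.
  by rewrite /zeta ku mulnC exprM prim_root_exp_coprime // coprime_sym prime_coprime.
have zp : zeta ^+ p = 1 := prim_expr_order zprim'.
have zk1 : zeta ^+ (k - 1) = 1.
  apply/eqP; rewrite -(prim_order_dvd zprim'); apply: dvdn_trans dk.
  have a1 : (1 <= a.-1)%N by rewrite -ltnS prednK.
  by rewrite -{1}(expn1 p) dvdn_exp2l.
have zetaF : zeta \in <<E; z>>%VS := zF _ _ _.
have roots j : root (minPoly E z) (z * zeta ^+ j).
  elim: j => [|j IH]; first by rewrite expr0 mulr1 root_minPoly.
  have hs := sig_hom rk.
  have := root_hom hs (rpredM (memv_adjoin _ _) (rpredX _ zetaF)) IH.
  rewrite (hom_M hs (memv_adjoin _ _) (rpredX _ zetaF)) (hom_X _ hs zetaF) sig_val //.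
  have -> : sig E z (z ^+ k) zeta = zeta.
    by rewrite {1}/zeta (hom_X _ hs) ?memv_adjoin // sig_val // zk exprMn zk1 mulr1.
  by rewrite zk -mulrA -exprS.
pose M := <<1; z ^+ p>>%AS.
have MF : (M <= <<E; z>>%AS)%VS.
  by apply/FadjoinP; split; [exact: sub1v | exact: zF].
have tauM j : {in M, forall v, sig E z (z * zeta ^+ j) v = v}.
  have hs := sig_hom (roots j).
  apply: (hom_fix_adj hs (zF _ _ _)).
  by rewrite (hom_X _ hs) ?memv_adjoin // sig_val // exprMn exprAC zp expr1n mulr1.
apply/subvP => x xE.
have xMz : x \in <<M; z>>%VS.
  have : (<<1; z>>%AS <= <<M; z>>%AS)%VS.
    by apply/FadjoinP; split; [exact: sub1v | exact: memv_adjoin].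
  by move/subvP; apply; apply: (subvP EQ).
pose c := Fadjoin_poly M z x.
have cM : c \is a polyOver M := Fadjoin_polyOver _ _ _.
have xc : c.[z] = x := Fadjoin_poly_eq xMz.
have szc : (size c <= p)%N.
  apply: leq_trans (size_Fadjoin_poly _ _ _) _.
  rewrite -ltnS -size_minPoly.
  have : minPoly M z %| 'X^p - (z ^+ p)%:P.
    apply: minPoly_dvdp.
      by rewrite rpredB ?polyOverXn // polyOverC memv_adjoin.
    by rewrite rootE !hornerE subrr.
  move/dvdp_leq; rewrite size_XnsubC ?prime_gt0 //; apply.
  by rewrite -size_poly_eq0 size_XnsubC ?prime_gt0.
have tx j : c.[z * zeta ^+ j] = x.
  have hs := sig_hom (roots j).
  rewrite -[RHS](hom_fixE hs xE) -[in RHS]xc.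
  rewrite (kHom_horner hs (polyOverSv MF cM) (memv_adjoin _ _)).
  by rewrite (map_fix (tauM j) cM) sig_val.
have sumx : p%:R * x = \sum_(j < p) c.[z * zeta ^+ j].
  rewrite (eq_bigr (fun _ => x)); last by move=> j _; rewrite tx.
  by rewrite sumr_const card_ord mulr_natl.
have sumc : \sum_(j < p) c.[z * zeta ^+ j] = p%:R * c`_0.
  under eq_bigr => j _ do rewrite (horner_coef_wide _ szc).
  rewrite exchange_big /=.
  transitivity (\sum_(i < p) (if (i : nat) == 0%N then p%:R * c`_0 else 0)).
    apply: eq_bigr => i _.
    under eq_bigr => j _ do rewrite exprMn exprAC mulrA.
    rewrite -mulr_sumr.
    case: eqP => [i0|i0].
      rewrite i0 !expr0 mulr1.
      under eq_bigr => j _ do rewrite expr1n.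
      by rewrite sumr_const card_ord mulr_natr mulr_natl.
    have ne : zeta ^+ i != 1.
      rewrite -(prim_order_dvd zprim') gtnNdvd // lt0n; exact/eqP.
    have := subrX1 (zeta ^+ i) p; rewrite exprAC zp expr1n subrr.
    move/esym/eqP; rewrite mulf_eq0 subr_eq0 (negPf ne) /= => /eqP ->.
    by rewrite mulr0.
  rewrite (bigD1 (Ordinal (prime_gt0 pp))) //= big1 ?addr0 // => i ni.
  rewrite ifF //; apply: contraNF ni => /eqP i0; apply/eqP; exact: val_inj.
have p0 : p%:R != 0 :> L := prim_root_natf_neq0 zprim'.
have -> : x = c`_0 by apply: (mulfI p0); rewrite sumx sumc.
exact: (polyOverP cM).
Qed.

End Fixed.
Section NoI.
Variables (L : fieldExtType rat) (a : nat) (z : L) (E : {subfield L}).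
Hypotheses (a2 : (1 < a)%N) (zprim : (2 ^ a).-primitive_root z).

Lemma no_i (f : 'End(L)) k : kHom E <<E; z>> f -> f z = z ^+ k -> (k %% 4 = 3)%N ->
  forall e x, x \in E -> x ^+ (2 ^ e) = 1 -> x ^+ 2 = 1.
Proof.
move=> hf fz k4.
have d4 : (4 %| 2 ^ a)%N by rewrite (_ : 4 = 2 ^ 2)%N // dvdn_exp2l.
have iprim := dvdn_prim_root zprim d4.
set i := z ^+ _ in iprim.
have i4 : i ^+ 4 = 1 := prim_expr_order iprim.
have i2 : i ^+ 2 = -1.
  have : i ^+ 2 != 1 by rewrite -(prim_order_dvd iprim).
  have : (i ^+ 2) ^+ 2 == 1 by rewrite -exprM i4.
  by rewrite sqrf_eq1 => /orP[/eqP-> /eqP//|/eqP->].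
have fi : f i = - i.
  rewrite /i (hom_X _ hf) ?memv_adjoin // fz exprAC -(expr_mod _ i4) k4.
  by rewrite exprS i2 mulrN1.
have two0 : 2%:R != 0 :> L.
  apply: contraNneq (prim_root_natf_neq0 zprim) => h2.
  by rewrite natrX h2 expr0n -(prednK (ltnW a2)).
have i0 : i != 0 by apply: contra_eq_neq i2 => ->; rewrite expr0n /= eq_sym oppr_eq0 oner_eq0.
have ini : i != - i.
  apply/eqP => h; have : 2%:R * i = 0 by rewrite mulr2n mulrDl mul1r {1}h addNr.
  by move/eqP; rewrite mulf_eq0 (negPf two0) (negPf i0).
elim=> [|e IH] x xE; first by rewrite expn0 expr1 => ->; rewrite expr1n.
rewrite expnS exprM => /(IH _ (rpredX _ xE)) /eqP; rewrite sqrf_eq1.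
case/orP=> /eqP // x2; exfalso.
have : (x - i) * (x + i) = 0 by rewrite -subr_sqr x2 i2 subrr.
have fx : f x = x := hom_fixE hf xE.
move/eqP; rewrite mulf_eq0 subr_eq0 addr_eq0 => /orP[]/eqP xi.
  by move: fx; rewrite xi fi => /eqP; rewrite eq_sym (negPf ini).
have h1 : f x = - f i.
  rewrite xi; first [exact: (linearN f i) | exact: (raddfN f i) | rewrite linearN //].
by move: h1; rewrite fx fi opprK xi => /eqP; rewrite eq_sym (negPf ini).
Qed.

End NoI.

Lemma root_list (L : fieldExtType rat) (E : {subfield L}) (z : L) n :
  n.-primitive_root z -> exists t : seq L,
  [/\ uniq t, size t = adjoin_degree E z & forall r, r \in t = root (minPoly E z) r].
Proof.
move=> zprim.
have n0 : (0 < n)%N := prim_order_gt0 zprim.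
have : minPoly E z %| \prod_(0 <= i < n) ('X - (z ^+ i)%:P).
  rewrite factor_Xn_sub_1 //; apply: minPoly_dvdp.
    by rewrite rpredB ?polyOverXn ?rpred1.
  by rewrite rootE !hornerE prim_expr_order // subrr.
case/dvdp_prod_XsubC => m Hm.
exists [seq z ^+ i | i <- mask m (index_iota 0 n)].
have eqm : minPoly E z %= \prod_(x <- [seq z ^+ i | i <- mask m (index_iota 0 n)]) ('X - x%:P).
  by rewrite big_map.
split.
- rewrite map_inj_in_uniq ?mask_uniq ?iota_uniq // => i j.
  move=> /mem_mask; rewrite mem_index_iota => ltin /mem_mask.
  rewrite mem_index_iota => ltjn /eqP.
  by rewrite (eq_prim_root_expr zprim) !modn_small // => /eqP.
- by have := eqp_size eqm; rewrite size_minPoly size_prod_XsubC => -[].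
- by move=> r; rewrite (eqp_root eqm) root_prod_XsubC.
Qed.
Lemma root_pow (L : fieldExtType rat) (E : {subfield L}) (z : L) n r :
  n.-primitive_root z -> root (minPoly E z) r -> exists k, r = z ^+ k.
Proof.
move=> zprim rr.
have : minPoly E z %| 'X^n - 1.
  apply: minPoly_dvdp; first by rewrite rpredB ?polyOverXn ?rpred1.
  by rewrite rootE !hornerE prim_expr_order // subrr.
move/root_dvdp/(_ rr); rewrite rootE !hornerE subr_eq0 => /eqP /(prim_rootP zprim).
by case=> k ->; exists k.
Qed.

Section Main.
Variables (gT : finGroupType) (P : {group gT}) (p : nat) (i : Iirr P) (a : nat).
Hypotheses (pp : prime p) (pP : (p.-group P)%g) (a0 : (0 < a)%N)
  (cond : conductor_is 'chi_i (p ^ a)).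
Variables (L : fieldExtType rat) (iota : {rmorphism L -> algC}) (s : seq L) (z : L).
Hypotheses (Hs : map iota s = [seq 'chi_i g | g in P])
  (Hz : (p ^ a).-primitive_root (iota z)).

Lemma zprim : (p ^ a).-primitive_root z.
Proof. by rewrite -(fmorph_primitive_root iota). Qed.

Lemma iota_horner q y :
  iota ((map_poly (in_alg L) q).[y]) = (map_poly ratr q).[iota y].
Proof.
rewrite -horner_map /= -map_poly_comp; congr (_.[_]); apply: eq_map_poly => r /=.
by have /= -> := fmorph_eq_rat (in_alg L) r; rewrite fmorph_rat.
Qed.

Lemma mem_s x : x \in s -> exists2 g, g \in P & iota x = 'chi_i g.
Proof.
move=> xs; have : iota x \in [seq 'chi_i g | g in P] by rewrite -Hs map_f.
by case/mapP => g; rewrite mem_enum => gP ->; exists g.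
Qed.

Lemma s_mem g : g \in P -> exists2 x, x \in s & iota x = 'chi_i g.
Proof.
move=> gP; have : 'chi_i g \in map iota s by rewrite Hs map_f ?mem_enum.
by case/mapP => x xs ->; exists x.
Qed.

Lemma in1 x y : x \in <<1; y>>%VS -> exists q, iota x = (map_poly ratr q).[iota y].
Proof.
case/Fadjoin_polyP => c /polyOver1P[q ->] ->.
by exists q; rewrite iota_horner.
Qed.

Lemma s_sub : {subset s <= <<1; z>>%VS}.
Proof.
move=> x xs; have [g gP xg] := mem_s xs.
have [_ [vals _]] := cond.
have [z' z'prim [q gq]] := vals g gP.
have [j zj] := prim_rootP Hz (prim_expr_order z'prim).
have : iota x = iota ((map_poly (in_alg L) q).[z ^+ j]).
  by rewrite iota_horner rmorphXn /= -zj xg gq.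
move/fmorph_inj => ->; apply: rpred_horner; last by rewrite rpredX ?memv_adjoin.
by apply: (polyOverSv (sub1v _)); apply/polyOver1P; exists q.
Qed.


Definition EE := <<1 & z ^+ (p ^ a.-1) :: s>>%AS.

Lemma E_sub : (EE <= <<1; z>>)%VS.
Proof.
apply/Fadjoin_seqP; split; first exact: sub1v.
move=> x; rewrite inE => /orP[/eqP-> | /s_sub //].
by rewrite rpredX ?memv_adjoin.
Qed.

Lemma s_E : {subset s <= EE}.
Proof. by move=> x xs; apply: seqv_sub_adjoin; rewrite inE xs orbT. Qed.

Lemma F_eq : <<1 & z :: s>>%VS = <<EE; z>>%VS.
Proof.
apply/eqP; rewrite eqEsubv; apply/andP; split.
  apply/Fadjoin_seqP; split; first exact: sub1v.
  move=> x; rewrite inE => /orP[/eqP-> | xs]; first exact: memv_adjoin.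
  by apply: (subvP (subv_adjoin _ _)); exact: s_E.
apply/FadjoinP; split; last by apply: seqv_sub_adjoin; rewrite inE eqxx.
apply/Fadjoin_seqP; split; first exact: sub1v.
have zF : z \in <<1 & z :: s>>%VS by apply: seqv_sub_adjoin; rewrite inE eqxx.
move=> x; rewrite inE => /orP[/eqP-> | xs]; first by rewrite rpredX.
by apply: seqv_sub_adjoin; rewrite inE xs orbT.
Qed.

Lemma noQp : (1 < a)%N -> ~ (EE <= <<1; z ^+ p>>)%VS.
Proof.
move=> a2 sub.
have [n0 [_ minc]] := cond.
have vals : values_in_Qn 'chi_i (p ^ a.-1).
  move=> g gP; have [x xs xg] := s_mem gP.
  have [q xq] := in1 (subvP sub _ (s_E xs)).
  exists (iota (z ^+ p)); last by exists q; rewrite -xg xq.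
  rewrite fmorph_primitive_root.
  have dv : (p ^ a.-1 %| p ^ a)%N by rewrite (pa_split p a0) dvdn_mull.
  have := dvdn_prim_root zprim dv.
  by rewrite {1}(pa_split p a0) mulnK // expn_gt0 prime_gt0.
have := minc _ _ vals; rewrite expn_gt0 prime_gt0 // => /(_ isT).
by rewrite leq_exp2l ?prime_gt1 // -ltnS prednK // ltnn.
Qed.


Lemma valid_pow k m : root (minPoly EE z) (z ^+ k) -> root (minPoly EE z) (z ^+ (k ^ m)).
Proof.
move=> rk; elim: m => [|m IH]; first by rewrite expn0 expr1 root_minPoly.
by rewrite expnS valid_mul.
Qed.

Lemma bad k : (1 < a)%N -> root (minPoly EE z) (z ^+ k) -> (0 < k)%N ->
  (p %| k - 1)%N -> ~~ (p ^ a %| k - 1)%N ->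
  [|| odd p, (4 %| k - 1)%N | a == 2] -> False.
Proof.
move=> a2 rk k0 pk npk cnd.
have [m /andP[h1 h2]] := arith_main pp a2 k0 pk npk cnd.
apply: (noQp a2); apply: (fixed_field pp a0 zprim a2 E_sub _ (valid_pow m rk)) => //.
by rewrite expn_gt0 k0.
Qed.

Lemma neq_z k : (0 < k)%N -> (z ^+ k != z) = ~~ (p ^ a %| k - 1)%N.
Proof.
by move=> k0; rewrite -{2}(expr1 z) (eq_prim_root_expr zprim) eqn_mod_dvd.
Qed.

Lemma other_root r : r != z -> root (minPoly EE z) r ->
  exists k, [/\ r = z ^+ k, (0 < k)%N, (p %| k - 1)%N & ~~ (p ^ a %| k - 1)%N].
Proof.
move=> rz rr; have [k rk] := root_pow zprim rr.
have wE : z ^+ (p ^ a.-1) \in EE by apply: seqv_sub_adjoin; rewrite inE eqxx.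
have [k0 pk] := valid_mod pp a0 zprim wE (eq_ind _ (root _) rr _ rk).
by exists k; split=> //; rewrite -neq_z // -rk.
Qed.


Lemma main_sec :
  let QpaA := <<1 & z :: s>>%VS in
  let QpA := <<1 & (z ^+ (p ^ a.-1))%R :: s>>%VS in
  ((odd p \/ p ^ a = 4)%N -> QpaA = QpA) /\
  (p = 2%N -> (8 <= p ^ a)%N ->
     (\dim_QpA QpaA <= 2)%N /\ ((\dim_QpA QpaA)%:R %| 'chi_i 1%g)%C).
Proof.
move=> QpaA QpA.
have FE : QpaA = <<EE; z>>%VS := F_eq.
have dimE : \dim_QpA QpaA = adjoin_degree EE z by rewrite FE adjoin_degreeE.
have [t [ut st tE]] := root_list EE zprim.
have zt : z \in t by rewrite tE root_minPoly.
have st0 : (0 < size t)%N by case: (t) zt.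
have remP r : r \in rem z t -> r != z /\ root (minPoly EE z) r.
  by rewrite (mem_rem_uniq _ ut) inE => /andP[-> rt]; rewrite -tE.
have srem : size (rem z t) = (size t).-1 := size_rem zt.
split.
  move=> cnd; suff zE : z \in EE by rewrite FE; apply/Fadjoin_idP.
  rewrite -adjoin_deg_eq1 -st; apply/negPn/negP => s1.
  have : (0 < size (rem z t))%N by rewrite srem -(ltn_predK st0) /= lt0n; move: s1; rewrite -(ltn_predK st0) eqSS.
  case E1 : (rem z t) => [//|r t'] _.
  have [rz rr] : r != z /\ root (minPoly EE z) r by apply: remP; rewrite E1 inE eqxx.
  have [k [rk k0 pk npk]] := other_root rz rr.
  have [a1|a2] := leqP a 1.
    by move: npk; rewrite (_ : a = 1%N) ?expn1 ?pk //; apply/eqP; rewrite eqn_leq a1 a0.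
  apply: (bad a2 _ k0 pk npk); first by rewrite -rk.
  case: cnd => [->//|pa4]; apply/orP; right; apply/orP; right.
  rewrite eqn_leq a2 andbT leqNgt; apply/negP => a3.
  have h1 : (2 ^ a <= p ^ a)%N by rewrite leq_exp2r ?prime_gt1 // (ltnW a2).
  have h2 : (2 ^ 3 <= 2 ^ a)%N by rewrite leq_exp2l.
  by have := leq_trans h2 h1; rewrite pa4.
move=> p2 a8.
have a3 : (2 < a)%N by move: a8; rewrite p2 (_ : 8 = 2 ^ 3)%N // leq_exp2l.
have a2 : (1 < a)%N := ltnW a3.
have wE : z ^+ (p ^ a.-1) \in EE by apply: seqv_sub_adjoin; rewrite inE eqxx.
have D k : root (minPoly EE z) (z ^+ k) -> z ^+ k != z -> (k %% 4 = 3)%N.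
  move=> rk nz; have [k0 pk] := valid_mod pp a0 zprim wE rk.
  have npk : ~~ (p ^ a %| k - 1)%N by rewrite -neq_z.
  have n4 : ~~ (4 %| k - 1)%N.
    by apply/negP => h4; apply: (bad a2 rk k0 pk npk); rewrite h4 orbT.
  move: pk n4; rewrite p2; lia.
have getk r : r \in rem z t -> exists k, [/\ r = z ^+ k, root (minPoly EE z) (z ^+ k),
    z ^+ k != z & (k %% 4 = 3)%N].
  case/remP => rz rr; have [k [rk _ _ _]] := other_root rz rr.
  have rk' : root (minPoly EE z) (z ^+ k) by rewrite -rk.
  have nk : z ^+ k != z by rewrite -rk.
  by exists k; split=> //; apply: D.
have d2 : (adjoin_degree EE z <= 2)%N.
  rewrite -st leqNgt; apply/negP => s3.
  have : (1 < size (rem z t))%N by rewrite srem; lia.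
  have u' : uniq (rem z t) := rem_uniq z ut.
  case E1 : (rem z t) u' => [|r1 [|r2 t']] // u' _.
  have m1 : r1 \in rem z t by rewrite E1 inE eqxx.
  have m2 : r2 \in rem z t by rewrite E1 !inE eqxx orbT.
  have [k1 [rk1 v1 _ h1]] := getk r1 m1.
  have [k2 [rk2 v2 _ h2]] := getk r2 m2.
  have e12 : z ^+ (k1 * k2) = z.
    apply/eqP; apply/negPn/negP => ne; have := D _ (valid_mul v1 v2) ne.
    by rewrite -modnMml -modnMmr h1 h2.
  have e11 : z ^+ (k1 * k1) = z.
    apply/eqP; apply/negPn/negP => ne; have := D _ (valid_mul v1 v1) ne.
    by rewrite -modnMml -modnMmr h1.
  have : r2 = r1 by rewrite rk1 rk2 -{1}e11 -exprM mulnAC exprM e12.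
  by move=> e; move: u'; rewrite e /= inE eqxx.
split; first by rewrite dimE.
rewrite dimE.
have dpos : (0 < adjoin_degree EE z)%N by rewrite -st.
have [d1|d1] : adjoin_degree EE z = 1%N \/ adjoin_degree EE z = 2%N by lia.
  by rewrite d1 irr1_degree; exact: (etrans (dvdC_nat 1 _) (dvd1n _)).
rewrite d1.
have : (0 < size (rem z t))%N by rewrite srem st d1.
case E1 : (rem z t) => [//|r t'] _.
have m1 : r \in rem z t by rewrite E1 inE eqxx.
have [k [rk vk nk k4]] := getk r m1.
have hs := sig_hom vk.
have sz : sig EE z (z ^+ k) z = z ^+ k := sig_val vk.
have lin : 'chi_i 1%g != 1.
  apply/eqP => c1.
  have lch : 'chi_i \is a linear_char by rewrite qualifE /= irr_char c1 eqxx.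
  have vals : values_in_Qn 'chi_i 1.
    move=> g gP; have [x xs xg] := s_mem gP.
    have [e oe] := p_natP (mem_p_elt pP gP).
    have xe : x ^+ (2 ^ e) = 1.
      apply: (fmorph_inj iota); rewrite rmorphXn rmorph1 xg -p2 -oe.
      exact: (lin_char_unity_root lch gP).
    have zprim2 : (2 ^ a).-primitive_root z by rewrite -p2; exact: zprim.
    have x2 := no_i a2 zprim2 hs sz k4 (s_E xs) xe.
    have : ('chi_i g) ^+ 2 == 1 by rewrite -xg -rmorphXn x2 rmorph1.
    have pr1 : 1.-primitive_root ((iota z) ^+ (p ^ a)).
      by have := dvdn_prim_root Hz (dvd1n (p ^ a)); rewrite divn1.
    rewrite sqrf_eq1 => /orP[]/eqP ->; exists ((iota z) ^+ (p ^ a)) => //.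
      by exists 1%:P; rewrite map_polyC /= rmorph1 hornerC.
    by exists (-1)%:P; rewrite map_polyC /= rmorphN1 hornerC.
  have [_ [_ minc]] := cond.
  have := minc 1%N isT vals.
  by rewrite leqNgt -[X in (X < _)%N](expn0 p) ltn_exp2l ?prime_gt1 // a0.
have [nd cnd] : exists nd, 'chi_i 1%g = nd%:R.
  by exists (irr_degree (socle_of_Iirr i)); exact: irr1_degree.
have hd := dvd_irr1_cardG i; rewrite cnd in hd.
have hd' := etrans (esym (dvdC_nat nd #|P|)) hd.
rewrite cnd; apply: (etrans (dvdC_nat 2 nd)).
move: hd'; have [e oe] := p_natP pP; rewrite oe p2.
case/(@dvdn_pfactor 2 nd e isT) => m _ nm.
move: lin; rewrite cnd pnatr_eq1 nm.
by case: m {nm} => [//|m] _; rewrite expnS dvdn_mulr.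
Qed.

End Main.

Unset Implicit Arguments.
Theorem lemma3p1 (gT : finGroupType) (P : {group gT}) (p : nat) (i : Iirr P)
  (a : nat) :
  prime p -> (p.-group P)%g -> (0 < a)%N -> conductor_is 'chi_i (p ^ a) ->
  forall (L : fieldExtType rat) (iota : {rmorphism L -> algC})
         (s : seq L) (z : L),
  map iota s = [seq 'chi_i g | g in P] ->
  (p ^ a).-primitive_root (iota z) ->
  let QpaA := <<1 & z :: s>>%VS in
  let QpA := <<1 & (z ^+ (p ^ a.-1))%R :: s>>%VS in
  ((odd p \/ p ^ a = 4)%N -> QpaA = QpA) /\
  (p = 2%N -> (8 <= p ^ a)%N ->
     (\dim_QpA QpaA <= 2)%N /\ ((\dim_QpA QpaA)%:R %| 'chi_i 1%g)%C).
Proof.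
move=> pp pP a0 cond L iota s z Hs Hz.
exact (main_sec pp pP a0 cond Hs Hz).
Qed.
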